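(* Let $(\Gamma(-),X)$ be a connected graph of groups with fundamental group $\Gamma$, and suppose that $X$ has only finitely many vertices. Then there exist a graph of groups $(\Delta(-),Y)$ with $|V(Y)|<\infty$ and a spanning tree $T$ in $Y$ such that $\pi_1(\Delta(-),Y)\cong\Gamma$ and \[ \Delta(e)^e\neq\Delta(t(e))\quad\text{and}\quad \Delta(e)^{\bar e}\neq \Delta(o(e))\qquad\text{for all } e\in E(T). \] Moreover, if $(\Gamma(-),X)$ satisfies the finiteness condition $(F_1)$: $X$ is a finite graph, or the finiteness condition $(F_2)$: $\Gamma(v)$ is finite for every vertex $v\in V(X)$, then $(\Delta(-),Y)$ may be chosen so as to enjoy the same property.
   Context: Graphs are in the sense of Serre: a graph $X$ consists of a vertex set $V(X)$, a set $E(X)$ of directed edges with a fixed-point-free involution $e\mapsto\bar e$, and maps $o,t:E(X)\to V(X)$ (origin, terminus) with $t(\bar e)=o(e)$; loops and multiple edges are allowed. A graph of groups $(\Gamma(-),X)$ assigns to each vertex $v$ a group $\Gamma(v)$ and to each edge $e$ a group $\Gamma(e)$ with $\Gamma(\bar e)=\Gamma(e)$, together with monomorphisms $\Gamma(e)\to\Gamma(t(e))$, $a\mapsto a^e$; for $a\in\Gamma(e)$, $a^{\bar e}\in\Gamma(o(e))$ denotes the image under the monomorphism attached to $\bar e$. We write $\Gamma(e)^e$ and $\Gamma(e)^{\bar e}$ for the images of $\Gamma(e)$ in $\Gamma(t(e))$ and $\Gamma(o(e))$. $\pi_1(\Gamma(-),X)$ denotes the fundamental group of the graph of groups (Bass–Serre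 theory). *)

(* Defs.v *)
From Stdlib Require Import List.
Import ListNotations.
Set Implicit Arguments.

Record Group := {
  carrier :> Type;
  gmul : carrier -> carrier -> carrier;
  gone : carrier;
  ginv : carrier -> carrier;
  gmulA : forall x y z, gmul x (gmul y z) = gmul (gmul x y) z;
  gmul1g : forall x, gmul gone x = x;
  gmulg1 : forall x, gmul x gone = x;
  gmulVg : forall x, gmul (ginv x) x = gone;
  gmulgV : forall x, gmul x (ginv x) = gone }.
Arguments gmul {g}. Arguments gone {g}. Arguments ginv {g}.

Definition is_hom (G H : Group) (f : G -> H) : Prop :=
  forall x y, f (gmul x y) = gmul (f x) (f y).

Arguments is_hom {G H}.

Definition finite_type (A : Type) : Prop := exists l : list A, forall x, In x l.

Record graph := {
  V : Type;
  E : Type;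
  ebar : E -> E;
  org : E -> V;
  ter : E -> V;
  ebarK : forall e, ebar (ebar e) = e;
  ebar_neq : forall e, ebar e <> e;
  ter_ebar : forall e, ter (ebar e) = org e }.
Arguments ebar {g}. Arguments org {g}. Arguments ter {g}.

Fixpoint is_path (X : graph) (P : E X -> Prop) (u v : V X) (l : list (E X)) : Prop :=
  match l with
  | [] => u = v
  | e :: l' => P e /\ org e = u /\ @is_path X P (ter e) v l'
  end.

Fixpoint reduced (X : graph) (l : list (E X)) : Prop :=
  match l with
  | e1 :: ((e2 :: _) as l') => e2 <> ebar e1 /\ @reduced X l'
  | _ => True
  end.

Arguments is_path {X}.
Arguments reduced {X}.

Definition connected_by (X : graph) (P : E X -> Prop) : Prop :=
  forall u v : V X, exists l, is_path P u v l.

Arguments connected_by {X}.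

Definition connected (X : graph) : Prop := @connected_by X (fun _ : E X => True).

Definition spanning_tree {X : graph} (T : E X -> Prop) : Prop :=
  (forall e, T e -> T (ebar e)) /\
  connected_by T /\
  ~ (exists (v : V X) (l : list (E X)), l <> [] /\ is_path T v v l /\ reduced l).

Record gog (X : graph) := {
  vgrp : V X -> Group;
  egrp : E X -> Group;
  egrp_bar : forall e, egrp (ebar e) = egrp e;
  emono : forall e, egrp e -> vgrp (ter e);
  emono_hom : forall e, is_hom (emono e);
  emono_inj : forall e a b, emono e a = emono e b -> a = b }.

Definition up (X : graph) (D : gog X) (e : E X) (a : egrp D e) : vgrp D (ter e) :=
  emono D e a.

(* a^{ebar e} for a in Gamma(e); lands in Gamma(t(ebar e)) = Gamma(o(e)) *)
Definition upbar (X : graph) (D : gog X) (e : E X) (a : egrp D e)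
  : vgrp D (ter (ebar e)) :=
  emono D (ebar e) (eq_rect_r (fun G : Group => carrier G) a (egrp_bar D e)).

(* Data in H satisfying the relations of pi_1(D, X, T):
   homs psi_v : D(v) -> H, elements h_e with h_{ebar e} = h_e^{-1},
   h_e a^e h_e^{-1} = a^{ebar e}, and h_e = 1 for e in T. *)
Definition pi1_cone (X : graph) (D : gog X) (T : E X -> Prop) (H : Group)
  (psi : forall v : V X, vgrp D v -> H) (h : E X -> H) : Prop :=
  (forall v, is_hom (psi v)) /\
  (forall e, h (ebar e) = ginv (h e)) /\
  (forall e (a : egrp D e),
      gmul (gmul (h e) (psi (ter e) (up D e a))) (ginv (h e))
      = psi (ter (ebar e)) (upbar D e a)) /\
  (forall e, T e -> h e = gone).

Arguments pi1_cone {X} D T {H}.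
Arguments up {X}.
Arguments upbar {X}.

(* G is (isomorphic to) the fundamental group pi_1(D, X, T): G carries a
   universal family for the presentation of pi_1(D, X, T). *)
Definition is_pi1_tree (X : graph) (D : gog X) (T : E X -> Prop) (G : Group) : Prop :=
  exists (phi : forall v, vgrp D v -> G) (g : E X -> G),
    pi1_cone D T phi g /\
    forall (H : Group) (psi : forall v, vgrp D v -> H) (h : E X -> H),
      pi1_cone D T psi h ->
      (exists f : G -> H, is_hom f /\
          (forall v x, f (phi v x) = psi v x) /\ (forall e, f (g e) = h e)) /\
      (forall f1 f2 : G -> H, is_hom f1 -> is_hom f2 ->
          (forall v x, f1 (phi v x) = psi v x) -> (forall e, f1 (g e) = h e) ->
          (forall v x, f2 (phi v x) = psi v x) -> (forall e, f2 (g e) = h e) ->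
          forall y, f1 y = f2 y).

Definition is_pi1 (X : graph) (D : gog X) (G : Group) : Prop :=
  exists T, spanning_tree T /\ is_pi1_tree D T G.

Arguments is_pi1_tree {X}.
Arguments is_pi1 {X}.

Definition F1 {X : graph} (D : gog X) : Prop := finite_type (V X) /\ finite_type (E X).
Definition F2 {X : graph} (D : gog X) : Prop := forall v, finite_type (vgrp D v).

(* Main.v *)
Require Import Defs.
From Stdlib Require Import List Classical ClassicalEpsilon ProofIrrelevance Lia.
Import ListNotations.

Lemma hom_one (G H : Group) (f : G -> H) : is_hom f -> f gone = gone.
Proof.
  intro Hf. pose proof (Hf gone gone) as E. rewrite gmul1g in E.
  assert (E2 : gmul (ginv (f gone)) (f gone) = gmul (ginv (f gone)) (gmul (f gone) (f gone)))
    by (f_equal; exact E).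
  rewrite gmulA, gmulVg, gmul1g in E2. symmetry. exact E2.
Qed.

Lemma inv_one (G : Group) : ginv (gone : G) = gone.
Proof. rewrite <- (gmul1g _ (ginv gone)). apply gmulgV. Qed.

Lemma cast_hom (G1 G2 : Group) (p : G1 = G2) (x y : G2) :
  eq_rect_r carrier (gmul x y) p = gmul (eq_rect_r carrier x p) (eq_rect_r carrier y p).
Proof. destruct p. reflexivity. Qed.

Lemma cast_inj (G1 G2 : Group) (p : G1 = G2) (x y : G2) :
  eq_rect_r carrier x p = eq_rect_r carrier y p -> x = y.
Proof. destruct p. auto. Qed.

Lemma cast_cancel (G1 G2 : Group) (p : G1 = G2) (x : G1) :
  eq_rect_r carrier (eq_rect G1 carrier x G2 p) p = x.
Proof. destruct p. reflexivity. Qed.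

Lemma cast_sym (G1 G2 : Group) (p : G1 = G2) (x : G1) :
  eq_rect_r carrier x (eq_sym p) = eq_rect G1 carrier x G2 p.
Proof. destruct p. reflexivity. Qed.

Lemma sig_eq (A : Type) (P : A -> Prop) (a b : {x | P x}) :
  proj1_sig a = proj1_sig b -> a = b.
Proof. destruct a, b; simpl; intro; subst; f_equal; apply proof_irrelevance. Qed.

Lemma upbar_hom (X : graph) (D : gog X) e : is_hom (upbar D e).
Proof. intros x y. unfold upbar. rewrite cast_hom. apply emono_hom. Qed.

Lemma upbar_inj (X : graph) (D : gog X) e a b : upbar D e a = upbar D e b -> a = b.
Proof. unfold upbar. intro H. apply emono_inj in H. eapply cast_inj; eauto. Qed.

Lemma rel_bar (X : graph) (D : gog X) (K : Group) (psi : forall v, vgrp D v -> K) e :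
  (forall a, psi (ter e) (up D e a) = psi (ter (ebar e)) (upbar D e a)) ->
  forall b, psi (ter (ebar e)) (up D (ebar e) b) = psi (ter (ebar (ebar e))) (upbar D (ebar e) b).
Proof.
  intros Hc b.
  pose (a := eq_rect _ carrier b _ (egrp_bar D e)).
  assert (Ha : upbar D e a = emono D (ebar e) b).
  { unfold upbar, a. rewrite cast_cancel. reflexivity. }
  unfold up at 1. rewrite <- Ha, <- Hc. unfold up, upbar.
  generalize (egrp_bar D (ebar e)) as q.
  generalize (ebarK X e). generalize (ebar (ebar e)). intros f Hf. subst f. intro q.
  replace q with (eq_sym (egrp_bar D e)) by apply proof_irrelevance.
  rewrite cast_sym. reflexivity.
Qed.

Lemma reduced_cons (X : graph) (x : E X) l :
  reduced (x :: l) <-> (match l with [] => True | y :: _ => y <> ebar x end) /\ reduced l.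
Proof. destruct l; simpl; tauto. Qed.

Lemma is_path_app (X : graph) P (a b c : V X) l1 l2 :
  is_path P a b l1 -> is_path P b c l2 -> is_path P a c (l1 ++ l2).
Proof.
  revert a; induction l1; simpl; intros a0 H1 H2.
  - subst; auto.
  - destruct H1 as [? [? ?]]; eauto.
Qed.

Lemma filter_sig (A : Type) (P : A -> Prop) (l : list A) :
  exists l' : list {x | P x}, (forall x p, In x l -> In (exist _ x p) l') /\
    (forall z, In z l -> ~ P z -> length l' < length l) /\ length l' <= length l.
Proof.
  induction l as [|a l IH].
  - exists []. simpl. repeat split; intros; try contradiction; lia.
  - destruct IH as [l' [H1 [H2 H3]]].
    destruct (excluded_middle_informative (P a)) as [pa|npa].
    + exists (exist _ a pa :: l'). simpl. repeat split.
      * intros x p [->|Hx]; [left; f_equal; apply proof_irrelevance | right; auto].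
      * intros z [->|Hz] Hn; [contradiction|]. specialize (H2 z Hz Hn). lia.
      * lia.
    + exists l'. simpl. repeat split.
      * intros x p [->|Hx]; [contradiction|auto].
      * intros; lia.
      * lia.
Qed.

Section Contract.
Variables (X : graph) (D : gog X) (e0 : E X).
Local Notation w := (ter e0).
Local Notation u := (ter (ebar e0)).
Variable Hu : u <> w.
Variable Hsurj : forall b : vgrp D w, exists a, up D e0 a = b.

Definition pre (b : vgrp D w) : egrp D e0 :=
  proj1_sig (constructive_indefinite_description _ (Hsurj b)).
Lemma pre_spec b : up D e0 (pre b) = b.
Proof. unfold pre. destruct constructive_indefinite_description; auto. Qed.
Lemma pre_up a : pre (up D e0 a) = a.
Proof. apply (emono_inj D e0). apply pre_spec. Qed.
Lemma pre_hom : is_hom pre.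
Proof.
  intros x y. apply (emono_inj D e0). rewrite emono_hom.
  fold (up D e0). rewrite !pre_spec. reflexivity.
Qed.
Lemma pre_inj x y : pre x = pre y -> x = y.
Proof. intro H. rewrite <- (pre_spec x), <- (pre_spec y), H. reflexivity. Qed.

Definition theta (b : vgrp D w) : vgrp D u := upbar D e0 (pre b).
Lemma theta_up a : theta (up D e0 a) = upbar D e0 a.
Proof. unfold theta. rewrite pre_up. reflexivity. Qed.
Lemma theta_hom : is_hom theta.
Proof. intros x y. unfold theta. rewrite pre_hom. apply upbar_hom. Qed.
Lemma theta_inj x y : theta x = theta y -> x = y.
Proof. unfold theta. intro H. apply upbar_inj in H. apply pre_inj; auto. Qed.

Definition V' := {v : V X | v <> w}.
Definition Rv (v : V X) : {v' : V' & vgrp D v -> vgrp D (proj1_sig v')} :=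
  match excluded_middle_informative (v = w) with
  | left H => existT _ (exist _ u Hu) (fun x => theta (eq_rect v (fun z => vgrp D z) x w H))
  | right H => existT (fun v' : V' => vgrp D v -> vgrp D (proj1_sig v')) (exist _ v H) (fun x => x)
  end.
Definition r v : V' := projT1 (Rv v).
Definition rho v : vgrp D v -> vgrp D (proj1_sig (r v)) := projT2 (Rv v).

Lemma r_ne v (H : v <> w) : r v = exist _ v H.
Proof.
  unfold r, Rv. destruct (excluded_middle_informative (v = w)); [contradiction|].
  simpl. f_equal. apply proof_irrelevance.
Qed.
Lemma r_w : r w = exist _ u Hu.
Proof. unfold r, Rv. destruct (excluded_middle_informative (w = w)); [reflexivity|contradiction]. Qed.

Lemma rho_hom v : is_hom (rho v).
Proof.
  unfold rho, r, Rv. destruct (excluded_middle_informative (v = w)) as [H|H]; simpl.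
  - subst v. simpl. intros x y. apply theta_hom.
  - intros x y. reflexivity.
Qed.
Lemma rho_inj v x y : rho v x = rho v y -> x = y.
Proof.
  unfold rho, r, Rv. destruct (excluded_middle_informative (v = w)) as [H|H]; simpl.
  - subst v. simpl. apply theta_inj.
  - auto.
Qed.

Lemma rho_compat (K : Group) (psi : forall v, vgrp D v -> K) :
  (forall a, psi w (up D e0 a) = psi u (upbar D e0 a)) ->
  forall v x, psi (proj1_sig (r v)) (rho v x) = psi v x.
Proof.
  intros Hc v x. unfold r, rho, Rv.
  destruct (excluded_middle_informative (v = w)) as [H|H]; simpl.
  - subst v. simpl. unfold theta. rewrite <- Hc, pre_spec. reflexivity.
  - reflexivity.
Qed.

Lemma Psi_ne (K : Group) (Psi : forall v' : V', vgrp D (proj1_sig v') -> K) v (H : v <> w) x :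
  Psi (r v) (rho v x) = Psi (exist _ v H) x.
Proof.
  unfold r, rho, Rv. destruct (excluded_middle_informative (v = w)) as [E|E]; [contradiction|].
  simpl. replace E with H by apply proof_irrelevance. reflexivity.
Qed.

Lemma Psi_w (K : Group) (Psi : forall v' : V', vgrp D (proj1_sig v') -> K) x :
  Psi (r w) (rho w x) = Psi (exist _ u Hu) (theta x).
Proof.
  unfold r, rho, Rv. destruct (excluded_middle_informative (w = w)) as [E|E]; [|contradiction].
  simpl. replace E with (eq_refl w) by apply proof_irrelevance. reflexivity.
Qed.

Lemma ebar_ok e : e <> e0 /\ e <> ebar e0 -> ebar e <> e0 /\ ebar e <> ebar e0.
Proof.
  intros [h1 h2]; split; intro h.
  - apply h2. rewrite <- h, ebarK. reflexivity.
  - apply h1. rewrite <- (ebarK _ e), h, ebarK. reflexivity.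
Qed.

Definition E' := {e : E X | e <> e0 /\ e <> ebar e0}.
Definition ebar' (e' : E') : E' := exist _ (ebar (proj1_sig e')) (ebar_ok _ (proj2_sig e')).
Definition org' (e' : E') : V' := r (org (proj1_sig e')).
Definition ter' (e' : E') : V' := r (ter (proj1_sig e')).
Lemma ebarK' e : ebar' (ebar' e) = e.
Proof. apply sig_eq. simpl. apply ebarK. Qed.
Lemma ebar_neq' e : ebar' e <> e.
Proof. intro h. apply (@ebar_neq X (proj1_sig e)). exact (f_equal (@proj1_sig _ _) h). Qed.
Lemma ter_ebar' e : ter' (ebar' e) = org' e.
Proof. unfold ter', org'. simpl. rewrite ter_ebar. reflexivity. Qed.

Definition Y : graph := @Build_graph V' E' ebar' org' ter' ebarK' ebar_neq' ter_ebar'.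

Definition emono' (e : E Y) (a : egrp D (proj1_sig e)) : vgrp D (proj1_sig (ter e)) :=
  rho _ (emono D _ a).
Lemma emono_hom' e : is_hom (emono' e).
Proof. intros x y. unfold emono'. rewrite emono_hom. apply rho_hom. Qed.
Lemma emono_inj' e a b : emono' e a = emono' e b -> a = b.
Proof. unfold emono'. intro H. apply rho_inj in H. eapply emono_inj; eauto. Qed.

Definition Dl : gog Y :=
  @Build_gog Y (fun v => vgrp D (proj1_sig v)) (fun e => egrp D (proj1_sig e))
    (fun e => egrp_bar D (proj1_sig e)) emono' emono_hom' emono_inj'.


Variable T : E X -> Prop.
Variable HT0 : T e0.
Variable HTs : forall e, T e -> T (ebar e).
Definition T' (e : E Y) : Prop := T (proj1_sig e).

Lemma org_e0 : org e0 = u.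
Proof. symmetry. apply ter_ebar. Qed.

Lemma bad_edge e : ~ (e <> e0 /\ e <> ebar e0) -> e = e0 \/ e = ebar e0.
Proof. intro H. destruct (classic (e = e0)); [left; auto|]. right. apply NNPP. intro. apply H; auto. Qed.

Lemma r_bad e : e = e0 \/ e = ebar e0 -> r (org e) = r (ter e).
Proof.
  intros [->| ->].
  - rewrite org_e0, r_w, (r_ne _ Hu). reflexivity.
  - rewrite <- ter_ebar, ebarK, r_w, (r_ne _ Hu). reflexivity.
Qed.

Lemma path_map l : forall a b, is_path T a b l -> exists l', @is_path Y T' (r a) (r b) l'.
Proof.
  induction l as [|e l IH]; simpl; intros a b Hp.
  - subst. exists []. reflexivity.
  - destruct Hp as [Te [Ho Hp]]. destruct (IH _ _ Hp) as [l' Hl'].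
    destruct (excluded_middle_informative (e <> e0 /\ e <> ebar e0)) as [ok|bad].
    + exists (exist _ e ok :: l'). simpl. split; [exact Te|split; [|exact Hl']].
      unfold org'. simpl. rewrite Ho. reflexivity.
    + exists l'. rewrite <- Ho, r_bad by (apply bad_edge; auto). exact Hl'.
Qed.

Lemma connector a b : r a = r b -> exists c, is_path T a b c /\ (c = [] \/ c = [e0] \/ c = [ebar e0]).
Proof.
  intro H. destruct (classic (a = w)) as [Ha|Ha]; destruct (classic (b = w)) as [Hb|Hb].
  - exists []. simpl. split; [congruence|auto].
  - rewrite Ha, r_w, (r_ne _ Hb) in H. injection H as H. 
    exists [ebar e0]. simpl. split; [|auto]. split; [apply HTs, HT0|].
    split; [rewrite <- ter_ebar, ebarK; auto | auto].
  - rewrite Hb, r_w, (r_ne _ Ha) in H. injection H as H.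
    exists [e0]. simpl. split; [|auto]. split; [apply HT0|]. rewrite org_e0. auto.
  - rewrite (r_ne _ Ha), (r_ne _ Hb) in H. injection H as H.
    exists []. simpl. auto.
Qed.

Lemma lift (l' : list E') : forall x' y', @is_path Y T' x' y' l' -> @reduced Y l' ->
  forall a b, r a = x' -> r b = y' ->
  exists l, is_path T a b l /\ reduced l /\ (l' <> [] -> l <> []) /\
    (forall f rest, l = f :: rest -> f = e0 \/ f = ebar e0 \/
       exists e2 rest', l' = e2 :: rest' /\ f = proj1_sig e2).
Proof.
  induction l' as [|e' l'' IH]; intros x' y' Hp Hr a b Ha Hb.
  - simpl in Hp. assert (Hab : r a = r b) by congruence. destruct (connector a b Hab) as [c [Hc Hcs]].
    exists c. split; [exact Hc|]. split; [destruct Hcs as [->|[->| ->]]; simpl; auto|].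
    split; [congruence|]. intros f rest ->. destruct Hcs as [H|[H|H]]; inversion H; auto.
  - destruct Hp as [Te [Ho Hp]]. apply reduced_cons in Hr. destruct Hr as [Hhd Hr].
    destruct e' as [e ok]. simpl in *.
    destruct (IH _ _ Hp Hr (ter e) b eq_refl Hb) as [lr [Hlr [Hrr [_ Hhr]]]].
    assert (Hac : r a = r (org e)) by (rewrite Ha, <- Ho; reflexivity).
    destruct (connector a (org e) Hac) as [c [Hc Hcs]].
    assert (He : reduced (e :: lr)).
    { apply reduced_cons. split; [|exact Hrr]. destruct lr as [|f rest]; [exact I|].
      destruct (Hhr f rest eq_refl) as [Hf|[Hf|[e2 [rest' [He2 Hf]]]]]; subst f; intro Hb'.
      - apply (proj2 ok). rewrite Hb', ebarK. reflexivity.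
      - apply (proj1 ok). rewrite <- (ebarK _ e), <- Hb', ebarK. reflexivity.
      - subst l''. apply Hhd. apply sig_eq. simpl. exact Hb'. }
    exists (c ++ e :: lr). split; [|split; [|split]].
    + eapply is_path_app; [exact Hc|]. simpl. auto.
    + destruct Hcs as [->|[->| ->]]; simpl; auto.
      * split; [exact (proj2 ok)|]. exact He.
      * split; [rewrite ebarK; exact (proj1 ok)|]. exact He.
    + intros _. destruct c; discriminate.
    + intros f rest Hfr. destruct Hcs as [->|[->| ->]]; simpl in Hfr; injection Hfr as Hf _; subst f; auto.
      right; right. exists (exist _ e ok), l''. auto.
Qed.

Lemma spanning' : spanning_tree T -> @spanning_tree Y T'.
Proof.
  intros [Hsym [Hconn Hacyc]]. split; [|split].
  - intros e He. unfold T' in *. simpl. apply Hsym. exact He.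
  - intros [a Ha] [b Hb]. destruct (path_map _ _ _ (proj2_sig (constructive_indefinite_description _ (Hconn a b)))) as [l' Hl'].
    rewrite (r_ne _ Ha), (r_ne _ Hb) in Hl'. exists l'. exact Hl'.
  - intros [[a Ha] [l' [Hne [Hp Hr]]]]. apply Hacyc.
    destruct (lift l' _ _ Hp Hr a a (r_ne _ Ha) (r_ne _ Ha)) as [l [H1 [H2 [H3 _]]]].
    exists a, l. auto.
Qed.


Lemma compat_cone (K : Group) (psi : forall v, vgrp D v -> K) h :
  pi1_cone D T psi h -> forall a, psi w (up D e0 a) = psi u (upbar D e0 a).
Proof.
  intros [_ [_ [Hrel HT]]] a. rewrite <- Hrel, (HT e0 HT0), inv_one, gmul1g, gmulg1. reflexivity.
Qed.

Lemma pi1' (G : Group) : is_pi1_tree D T G -> @is_pi1_tree Y Dl T' G.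
Proof.
  intros [phi [g [Hcone Huniv]]].
  pose proof (compat_cone _ _ _ Hcone) as Hc.
  destruct Hcone as [Hhom [Hinv [Hrel HT]]].
  exists (fun v x => phi (proj1_sig v) x), (fun e => g (proj1_sig e)).
  split.
  { split; [|split; [|split]].
    - intro v. apply Hhom.
    - intro e. simpl. apply Hinv.
    - intros [e ok] a. simpl.
      change (gmul (gmul (g e) (phi (proj1_sig (r (ter e))) (rho (ter e) (up D e a)))) (ginv (g e))
        = phi (proj1_sig (r (ter (ebar e)))) (rho (ter (ebar e)) (upbar D e a))).
      rewrite !(rho_compat _ phi Hc). apply Hrel.
    - intros e He. apply HT. exact He. }
  intros H Psi h' [Phom [Pinv [Prel PT]]].
  pose (psi := fun v (x : vgrp D v) => Psi (r v) (rho v x)).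
  pose (h := fun e => match excluded_middle_informative (e <> e0 /\ e <> ebar e0) with
                      | left p => h' (exist _ e p) | right _ => gone end).
  assert (Hpc : forall a, psi w (up D e0 a) = psi u (upbar D e0 a)).
  { intro a. unfold psi. rewrite Psi_w, theta_up, (Psi_ne _ _ _ Hu). reflexivity. }
  assert (Dc : pi1_cone D T psi h).
  { split; [|split; [|split]].
    - intros v x y. unfold psi. rewrite rho_hom. apply Phom.
    - intro e. unfold h.
      destruct (excluded_middle_informative (e <> e0 /\ e <> ebar e0)) as [ok|bad];
      destruct (excluded_middle_informative (ebar e <> e0 /\ ebar e <> ebar e0)) as [ok2|bad2].
      + rewrite <- (Pinv (exist _ e ok)). f_equal. apply sig_eq. reflexivity.
      + exfalso. apply bad2. apply ebar_ok. exact ok.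
      + exfalso. apply bad. rewrite <- (ebarK _ e). apply ebar_ok. exact ok2.
      + symmetry. apply inv_one.
    - intros e a. unfold h.
      destruct (excluded_middle_informative (e <> e0 /\ e <> ebar e0)) as [ok|bad].
      + exact (Prel (exist _ e ok) a).
      + rewrite inv_one, gmul1g, gmulg1.
        destruct (bad_edge e bad) as [->| ->].
        * apply Hpc.
        * apply (rel_bar X D H psi e0 Hpc).
    - intros e He. unfold h.
      destruct (excluded_middle_informative (e <> e0 /\ e <> ebar e0)) as [ok|bad]; [|reflexivity].
      apply (PT (exist _ e ok)). exact He. }
  destruct (Huniv H psi h Dc) as [[f [Hf [Hf1 Hf2]]] Hu2].
  split.
  - exists f. split; [exact Hf|split].
    + intros [v Hv] x. simpl. rewrite Hf1. unfold psi. apply Psi_ne.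
    + intros [e ok]. simpl. rewrite Hf2. unfold h.
      destruct (excluded_middle_informative (e <> e0 /\ e <> ebar e0)) as [ok2|bad]; [|contradiction].
      f_equal. apply sig_eq. reflexivity.
  - intros f1 f2 H1 H2 H1v H1e H2v H2e.
    assert (Hgen : forall f0 : G -> H, is_hom f0 ->
      (forall v x, f0 (phi (proj1_sig v) x) = Psi v x) -> (forall e, f0 (g (proj1_sig e)) = h' e) ->
      (forall v x, f0 (phi v x) = psi v x) /\ (forall e, f0 (g e) = h e)).
    { intros f0 Hf0 Hv He. split.
      - intros v x. rewrite <- (rho_compat _ phi Hc v x). apply Hv.
      - intro e. unfold h.
        destruct (excluded_middle_informative (e <> e0 /\ e <> ebar e0)) as [ok|bad].
        + exact (He (exist _ e ok)).
        + rewrite HT; [apply hom_one; exact Hf0|].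
          destruct (bad_edge e bad) as [->| ->]; [exact HT0|apply HTs; exact HT0]. }
    destruct (Hgen f1 H1 H1v H1e), (Hgen f2 H2 H2v H2e).
    eapply Hu2; eauto.
Qed.

End Contract.

Definition Concl (X : graph) (D : gog X) (G : Group) : Prop :=
  exists (Y : graph) (Dl : gog Y) (T : E Y -> Prop),
    finite_type (V Y) /\ spanning_tree T /\ is_pi1 Dl G /\
    (forall e, T e ->
       (exists y : vgrp Dl (ter e), forall a : egrp Dl e, up Dl e a <> y) /\
       (exists y : vgrp Dl (ter (ebar e)), forall a : egrp Dl e, upbar Dl e a <> y)) /\
    (F1 D -> F1 Dl) /\ (F2 D -> F2 Dl).

Lemma find_bad (X : graph) (D : gog X) (T : E X -> Prop) : spanning_tree T ->
  ~ (forall e, T e ->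
       (exists y : vgrp D (ter e), forall a : egrp D e, up D e a <> y) /\
       (exists y : vgrp D (ter (ebar e)), forall a : egrp D e, upbar D e a <> y)) ->
  exists e0, T e0 /\ (forall b : vgrp D (ter e0), exists a, up D e0 a = b) /\ ter (ebar e0) <> ter e0.
Proof.
  intros [Hsym [_ Hacyc]] Hbad.
  assert (H : exists e0, T e0 /\ (forall b : vgrp D (ter e0), exists a, up D e0 a = b)).
  { apply not_all_ex_not in Hbad. destruct Hbad as [e He].
    apply imply_to_and in He. destruct He as [Te He]. apply not_and_or in He.
    destruct He as [He|He].
    - exists e. split; [exact Te|]. intro b. apply NNPP. intro Hn. apply He. exists b.
      intros a Ha. apply Hn. exists a. exact Ha.
    - exists (ebar e). split; [apply Hsym; exact Te|]. intro b. apply NNPP. intro Hn.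
      apply He. exists b. intros a Ha. apply Hn.
      exists (eq_rect_r carrier a (egrp_bar D e)). exact Ha. }
  destruct H as [e0 [T0 Hs]]. exists e0. split; [exact T0|]. split; [exact Hs|].
  intro Heq. apply Hacyc. exists (ter e0), [e0]. simpl. split; [discriminate|].
  split; [|exact I]. split; [exact T0|]. split; [rewrite <- ter_ebar; exact Heq|reflexivity].
Qed.

Lemma main_ind n : forall (X : graph) (D : gog X) (G : Group),
  (exists l : list (V X), (forall x, In x l) /\ length l <= n) -> is_pi1 D G -> Concl X D G.
Proof.
  induction n as [|n IH]; intros X D G [l [Hl Hlen]] [T [HTs HTp]].
  all: destruct (classic (forall e, T e ->
       (exists y : vgrp D (ter e), forall a : egrp D e, up D e a <> y) /\
       (exists y : vgrp D (ter (ebar e)), forall a : egrp D e, upbar D e a <> y))) as [Hgood|Hbad].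
  1,3: exists X, D, T; split; [exists l; exact Hl|]; split; [exact HTs|];
       split; [exists T; auto|]; split; [exact Hgood|]; split; auto.
  all: destruct (find_bad X D T HTs Hbad) as [e0 [T0 [Hs Hu]]].
  - exfalso. destruct l; [exact (Hl (ter e0))|simpl in Hlen; lia].
  - pose (Yg := Y X D e0 Hu Hs).
    assert (HY : exists l' : list (V Yg), (forall x, In x l') /\ length l' <= n).
    { destruct (filter_sig _ (fun v => v <> ter e0) l) as [l' [H1 [H2 _]]].
      exists l'. split.
      - intros [x p]. apply H1, Hl.
      - assert (Hn : ~ (ter e0 <> ter e0)) by (intro Hc; apply Hc; reflexivity). specialize (H2 (ter e0) (Hl _) Hn). apply le_S_n. exact (PeanoNat.Nat.le_trans _ _ _ H2 Hlen). }
    assert (Hp : is_pi1 (Dl X D e0 Hu Hs) G).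
    { exists (T' X D e0 Hu Hs T). split.
      - apply spanning'; auto. apply HTs.
      - apply pi1'; auto. apply HTs. }
    destruct (IH _ _ _ HY Hp) as [Y2 [D2 [T2 [H1 [H2 [H3 [H4 [H5 H6]]]]]]]].
    exists Y2, D2, T2. split; [exact H1|]; split; [exact H2|]; split; [exact H3|]; split; [exact H4|]; split.
    + intro HF. apply H5. destruct HF as [[lv Hlv] [le Hle]]. split.
      * destruct (filter_sig _ (fun v => v <> ter e0) lv) as [l' [Hl1 _]].
        exists l'. intros [x p]. apply Hl1, Hlv.
      * destruct (filter_sig _ (fun e => e <> e0 /\ e <> ebar e0) le) as [l' [Hl1 _]].
        exists l'. intros [x p]. apply Hl1, Hle.
    + intro HF. apply H6. intros [v Hv]. apply HF.
Qed.

Theorem lemma3p1 (X : graph) (D : gog X) (G : Group)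
  (Xconn : connected X) (Xfin : finite_type (V X)) (HG : is_pi1 D G) :
  exists (Y : graph) (Dl : gog Y) (T : E Y -> Prop),
    finite_type (V Y) /\ spanning_tree T /\ is_pi1 Dl G /\
    (forall e, T e ->
       (exists y : vgrp Dl (ter e), forall a : egrp Dl e, up Dl e a <> y) /\
       (exists y : vgrp Dl (ter (ebar e)), forall a : egrp Dl e, upbar Dl e a <> y)) /\
    (F1 D -> F1 Dl) /\ (F2 D -> F2 Dl).
Proof.
  destruct Xfin as [l Hl]. exact (main_ind (length l) X D G (ex_intro _ l (conj Hl (le_n _))) HG).
Qed.
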